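(* Let $\mathcal{P}$ be a finite poset and let $N\in\mathrm{vec}^{\operatorname{Int}\mathcal{P}}$ be such that for all $a\le b\le c\le d$ in $\mathcal{P}\cup\{\infty\}$ the structure morphism $N(a,b)\to N(c,d)$ is zero. Then for every integer $d>0$, \[ \operatorname{Tor}_d^{\mathbb{k}(\operatorname{Int}\mathcal{P})}\big(N,\ \mathbb{k}(\operatorname{Int}\mathcal{P})/(e)\big)=0 . \]
   Context: $\mathbb{k}$ is a field. $\mathcal{P}\cup\{\infty\}$ is $\mathcal{P}$ with a new maximum $\infty$. $\operatorname{Int}\mathcal{P}=\{(a,b):a\le b,\ a,b\in\mathcal{P}\cup\{\infty\}\}$ with the product order. For a finite poset $\mathcal{Q}$, the incidence algebra $\mathbb{k}\mathcal{Q}$ has vector space basis the pairs $[x,y]$ with $x\le y$ in $\mathcal{Q}$ and multiplication $[x,y][y,z]=[x,z]$, $[x,y][z,w]=0$ if $y\ne z$. A representation $N\in\mathrm{vec}^{\mathcal{Q}}$ is a right $\mathbb{k}\mathcal{Q}$-module via $x\cdot[p,q]=N(p\le q)(x)$ for $x\in N(p)$ (and $0$ on other components). Here $e\coloneqq\sum_{c}[(c,c),(c,c)]\in\mathbb{k}(\operatorname{Int}\mathcal{P})$, the sum over the diagonal elements $(c,c)$ of $\operatorname{Int}\mathcal{P}$, and $(e)$ is the two-sided ideal it generates; $\mathbb{k}(\operatorname{Int}\mathcal{P})/(e)$ is regarded as a left $\mathbb{k}(\operatorname{Int}\mathcal{P})$-module. *)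

(* Defs.v *)
(* Tor over the incidence algebra k(Int P), computed by the
   standard bar resolution over k. *)
From HB Require Import structures.
From mathcomp Require Import all_boot all_order all_algebra.
Set Implicit Arguments. Unset Strict Implicit. Unset Printing Implicit Defensive.
Import Order.TTheory GRing.Theory.
Local Open Scope ring_scope.

Section IncidenceTor.
Context (k : fieldType) {disp : Order.disp_t} (P : finPOrderType disp).

(* P ∪ {∞}: None plays the role of the new maximum ∞. *)
Definition leinf (a b : option P) : bool :=
  match a, b with
  | _, None => true
  | None, Some _ => false
  | Some x, Some y => (x <= y)%O
  end.

Definition IntP := {ab : option P * option P | leinf ab.1 ab.2}.
Definition leQ (s t : IntP) : bool :=
  leinf (val s).1 (val t).1 && leinf (val s).2 (val t).2.

(* Basis of the incidence algebra k(Int P): pairs [s,t] with s <= t. *)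
Definition BA := {st : IntP * IntP | leQ st.1 st.2}.

(* structure constants: [s,t][t',u] = [s,u] if t = t', else 0 *)
Definition mulA (b c d : BA) : k :=
  if ((val b).2 == (val c).1) && ((val d).1 == (val b).1)
     && ((val d).2 == (val c).2) then 1 else 0.
Definition mulAo (b c d : option BA) : k :=
  match b, c, d with Some b, Some c, Some d => mulA b c d | _, _, _ => 0 end.

(* A representation N in vec^{Int P}: N(s) = k^(rdim s) (row vectors),
   N(s <= t) : x |-> x *m rmap s t. *)
Record rep := Rep {
  rdim : IntP -> nat;
  rmap : forall s t : IntP, 'M[k]_(rdim s, rdim t);
  rmap_id : forall s, rmap s s = 1%:M;
  rmap_comp : forall s t u, leQ s t -> leQ t u ->
      rmap s t *m rmap t u = rmap s u }.

Variable N : rep.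

(* basis of N as a vector space: pairs (s, i) with i < dim N(s) *)
Definition BN := {s : IntP & 'I_(rdim N s)}.

(* right module structure: coefficient of n' in n . b *)
Definition actN (n : BN) (b : BA) (n' : BN) : k :=
  if (tag n == (val b).1) && (tag n' == (val b).2)
  then rmap N (tag n) (tag n') (tagged n) (tagged n') else 0.

(* elements of the algebra as coefficient vectors; product; idempotent e;
   two-sided ideal (e). *)
Definition mulv (x y : BA -> k) : BA -> k :=
  fun d => \sum_(b : BA) \sum_(c : BA) x b * y c * mulA b c d.
Definition basisv (b : BA) : BA -> k := fun c => (c == b)%:R.
Definition evec : BA -> k := fun b =>
  if ((val b).1 == (val b).2) && ((val (val b).1).1 == (val (val b).1).2)
  then 1 else 0.
Definition inI (x : BA -> k) : Prop :=
  exists cf : BA -> BA -> k, forall d,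
    x d = \sum_(b : BA) \sum_(c : BA) cf b c * mulv (mulv (basisv b) evec) (basisv c) d.

(* Bar complex C_d = N ⊗_k A^{⊗ d} ⊗_k A (coordinates), with M = A a left
   module over itself; the quotient A/(e) is handled by working modulo
   N ⊗ A^{⊗ d} ⊗ (e). *)
Definition chain (d : nat) := BN -> d.-tuple BA -> BA -> k.

Definition bcoef (d : nat) (n : BN) (t : (d.+1).-tuple BA) (m : BA)
    (n' : BN) (t' : d.-tuple BA) (m' : BA) : k :=
  actN n (thead t) n' * ((val t' == behead t) && (m' == m))%:R
  + \sum_(j < d) (-1) ^+ j.+1 *
      (((n' == n) && (m' == m) && (take j t' == take j t)
         && (drop j.+1 t' == drop j.+2 t))%:R
       * mulAo (onth t j) (onth t j.+1) (onth t' j))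
  + (-1) ^+ d.+1 * (((n' == n) && (val t' == take d t))%:R
       * mulA (tnth t ord_max) m m').

Definition bd (d : nat) (v : chain d.+1) : chain d := fun n' t' m' =>
  \sum_(n : BN) \sum_(t : (d.+1).-tuple BA) \sum_(m : BA)
     v n t m * bcoef n t m n' t' m'.

Definition inIchain (d : nat) (v : chain d) : Prop := forall n t, inI (v n t).

Definition cycI (d : nat) : chain d -> Prop :=
  match d with 0 => fun _ => True | d'.+1 => fun v => inIchain (bd v) end.

Definition TorVanish (d : nat) : Prop :=
  forall v : chain d, cycI v ->
    exists w : chain d.+1, inIchain (fun n t m => v n t m - bd w n t m).

End IncidenceTor.

(* Main.v *)
Require Import Defs.
From HB Require Import structures.
From mathcomp Require Import all_boot all_order all_algebra ring zify.
From Stdlib Require Import FunctionalExtensionality.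
Set Implicit Arguments. Unset Strict Implicit. Unset Printing Implicit Defensive.
Import Order.TTheory GRing.Theory.
Local Open Scope ring_scope.

Section Basics.
Variables (k : fieldType) (disp : Order.disp_t) (P : finPOrderType disp).
Local Notation IntP := (IntP P).
Local Notation BA := (BA P).

Lemma leinf_refl (a : option P) : leinf a a.
Proof. by case: a => //= x; exact: Order.POrderTheory.le_refl. Qed.

Lemma leinf_trans (a b c : option P) : leinf a b -> leinf b c -> leinf a c.
Proof.
case: a => [x|]; case: b => [y|]; case: c => [z|] //=.
exact: Order.POrderTheory.le_trans.
Qed.

Lemma leQ_refl (s : IntP) : leQ s s.
Proof. by rewrite /leQ !leinf_refl. Qed.

Lemma leQ_trans (s t u : IntP) : leQ s t -> leQ t u -> leQ s u.
Proof.
rewrite /leQ => /andP[h1 h2] /andP[h3 h4].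
by rewrite (leinf_trans h1 h3) (leinf_trans h2 h4).
Qed.

Definition inf0 : IntP := exist _ (None, None) isT.
Definition baz : BA := exist _ (inf0, inf0) isT.

Definition src (m : BA) : IntP := (val m).1.
Definition tgt (m : BA) : IntP := (val m).2.

Lemma leQ_st (m : BA) : leQ (src m) (tgt m).
Proof. exact: (valP m). Qed.

Definition mkBA (s t : IntP) : BA := insubd baz (s, t).
Lemma val_mkBA s t : leQ s t -> val (mkBA s t) = (s, t).
Proof. by move=> h; rewrite /mkBA insubdK. Qed.
Lemma src_mkBA s t : leQ s t -> src (mkBA s t) = s.
Proof. by move=> h; rewrite /src val_mkBA. Qed.
Lemma tgt_mkBA s t : leQ s t -> tgt (mkBA s t) = t.
Proof. by move=> h; rewrite /tgt val_mkBA. Qed.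

Lemma BA_eq (b c : BA) : (b == c) = (src b == src c) && (tgt b == tgt c).
Proof.
apply/eqP/andP => [->//|[/eqP h1 /eqP h2]].
apply: val_inj; move: h1 h2; rewrite /src /tgt; case: (val b) => ? ?; case: (val c) => ? ? /= -> -> //.
Qed.

Definition prodA (b c : BA) : option BA :=
  if tgt b == src c then Some (mkBA (src b) (tgt c)) else None.

Lemma prodA_le b c : tgt b = src c -> leQ (src b) (tgt c).
Proof. move=> h; apply: leQ_trans (leQ_st b) _; rewrite h; exact: leQ_st. Qed.

Lemma prodA_Some b c d : prodA b c = Some d ->
  [/\ tgt b = src c, src d = src b & tgt d = tgt c].
Proof.
rewrite /prodA; case: eqP => // h [<-].
by rewrite src_mkBA ?tgt_mkBA //; apply: prodA_le.
Qed.

Lemma mulA_prodA b c d : Defs.mulA k b c d = (prodA b c == Some d)%:R.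
Proof.
rewrite /Defs.mulA /prodA -/(src b) -/(tgt b) -/(src c) -/(tgt c) -/(src d) -/(tgt d).
case: eqP => h //=.
have hl := prodA_le h.
rewrite [Some _ == _]/eq_op /= BA_eq src_mkBA // tgt_mkBA //.
by rewrite [src b == _]eq_sym [tgt c == _]eq_sym; case: (_ && _).
Qed.

Definition isI (m : BA) : bool := leinf (val (src m)).2 (val (tgt m)).1.

Definition Em (m : BA) : BA := mkBA (tgt m) (tgt m).
Lemma val_Em m : val (Em m) = (tgt m, tgt m).
Proof. by rewrite val_mkBA // leQ_refl. Qed.

Definition zhat (y : IntP) : IntP := exist _ ((val y).1, (val y).1) (leinf_refl _).
Definition pp (c : BA) : BA := mkBA (src c) (zhat (tgt c)).
Definition qq (c : BA) : BA := mkBA (zhat (tgt c)) (tgt c).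

Lemma leQ_pp c : isI c -> leQ (src c) (zhat (tgt c)).
Proof.
move=> hI; rewrite /leQ /=; apply/andP; split; last exact: hI.
by have /andP[] := leQ_st c.
Qed.
Lemma leQ_qq c : leQ (zhat (tgt c)) (tgt c).
Proof. by rewrite /leQ /= leinf_refl (valP (tgt c)). Qed.

Lemma prodA_pq c : isI c -> prodA (pp c) (qq c) = Some c.
Proof.
move=> hI; rewrite /prodA /pp /qq tgt_mkBA ?leQ_pp // src_mkBA ?leQ_qq // eqxx.
have e1 : src (mkBA (src c) (zhat (tgt c))) = src c by rewrite src_mkBA ?leQ_pp.
have e2 : tgt (mkBA (zhat (tgt c)) (tgt c)) = tgt c by rewrite tgt_mkBA ?leQ_qq.
rewrite e1 e2; congr Some; apply/eqP; rewrite BA_eq src_mkBA ?tgt_mkBA ?leQ_st ?eqxx //.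
Qed.

Lemma isI_qq c : isI (qq c).
Proof. by rewrite /isI /qq src_mkBA ?tgt_mkBA ?leQ_qq //= leinf_refl. Qed.

End Basics.

Section InI.
Variables (k : fieldType) (disp : Order.disp_t) (P : finPOrderType disp).
Local Notation IntP := (IntP P).
Local Notation BA := (BA P).

Lemma sift (T : finType) (j : T) (F : T -> k) : \sum_i ((i == j)%:R * F i) = F j.
Proof.
rewrite (bigD1 j) //= eqxx mul1r big1 ?addr0 // => i hi; by rewrite (negbTE hi) mul0r.
Qed.

Lemma sift_and (T : finType) (j : T) (b : T -> bool) (F : T -> k) :
  \sum_i (((i == j) && b i)%:R * F i) = (b j)%:R * F j.
Proof.
rewrite (bigD1 j) //= eqxx big1 ?addr0 // => i hi; by rewrite (negbTE hi) mul0r.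
Qed.

Lemma evecE (c : BA) : @evec k disp P c =
  ((src c == tgt c) && ((val (src c)).1 == (val (src c)).2))%:R.
Proof. by rewrite /evec; case: (_ && _). Qed.

Definition gen (b c : BA) := mulv (mulv (basisv k b) (@evec k disp P)) (basisv k c).

Lemma genE b c d : gen b c d =
  \sum_(b'' : BA) \sum_(c' : BA) @evec k disp P c' * Defs.mulA k b c' b'' * Defs.mulA k b'' c d.
Proof.
rewrite /gen /mulv; apply: eq_bigr => b'' _.
rewrite (eq_bigr (fun c0 => (c0 == c)%:R * ((\sum_b0 \sum_c1 basisv k b b0 * @evec k disp P c1 * Defs.mulA k b0 c1 b'') * Defs.mulA k b'' c0 d))); last first.
  by move=> c0 _; rewrite /basisv mulrAC mulrC.
rewrite sift -mulr_suml; congr (_ * _).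
rewrite exchange_big /=; apply: eq_bigr => c1 _.
rewrite (eq_bigr (fun b0 => (b0 == b)%:R * (@evec k disp P c1 * Defs.mulA k b0 c1 b''))); last first.
  by move=> b0 _; rewrite /basisv mulrA.
by rewrite sift.
Qed.

Lemma gen_supp b c d : ~~ isI d -> gen b c d = 0.
Proof.
rewrite genE => hd.
apply: big1 => b'' _; apply: big1 => c' _.
rewrite evecE !mulA_prodA.
case h1: (prodA b c' == Some b''); last by rewrite mulr0 mul0r.
case h2: (prodA b'' c == Some d); last by rewrite mulr0.
case h3: (_ && _); last by rewrite !mul0r.
exfalso; move/negP: hd; apply.
move: h3 => /andP[/eqP e1 /eqP e2].
have [t1 s1 u1] := prodA_Some (eqP h1).
have [t2 s2 u2] := prodA_Some (eqP h2).
rewrite /isI s2 s1 u2.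
have /andP[_ l1] := leQ_st b.
have /andP[l2 _] := leQ_st c.
apply: leinf_trans l1 _.
rewrite t1 -e2 e1 -u1 t2; exact: l2.
Qed.
Lemma prodA_Em (b : BA) : prodA b (Em b) = Some b.
Proof.
rewrite /prodA /Em src_mkBA ?leQ_refl // eqxx tgt_mkBA ?leQ_refl //.
congr Some; apply/eqP; rewrite BA_eq src_mkBA ?tgt_mkBA ?leQ_st ?eqxx //.
Qed.

Lemma diag_right (b b'' : BA) : (val (tgt b)).1 = (val (tgt b)).2 ->
  \sum_(c' : BA) @evec k disp P c' * Defs.mulA k b c' b'' = (b'' == b)%:R.
Proof.
move=> hdg.
rewrite (bigD1 (Em b)) //= big1 ?addr0.
  rewrite evecE mulA_prodA prodA_Em /src /tgt val_Em /= eqxx /= hdg eqxx mul1r.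
  by rewrite [Some b == _]eq_sym.
move=> c' hc; rewrite evecE mulA_prodA.
case h3: (_ && _); last by rewrite mul0r.
case h1: (prodA b c' == Some b''); last by rewrite mulr0.
exfalso; move/negP: hc; apply.
move: h3 => /andP[/eqP e1 _]; have [t1 _ _] := prodA_Some (eqP h1).
apply/eqP/val_inj; rewrite val_Em; move: e1 t1; rewrite /src /tgt.
by case: (val c') => ? ? /= <- <-.
Qed.

Lemma gen_pq (m d : BA) : isI m -> gen (pp m) (qq m) d = (d == m)%:R.
Proof.
move=> hI; rewrite genE.
have hdg : (val (tgt (pp m))).1 = (val (tgt (pp m))).2.
  by rewrite /pp tgt_mkBA ?leQ_pp.
rewrite (eq_bigr (fun b'' => (b'' == pp m)%:R * Defs.mulA k b'' (qq m) d)); last first.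
  by move=> b'' _; rewrite -mulr_suml diag_right.
by rewrite sift mulA_prodA prodA_pq // eq_sym.
Qed.

Lemma inI_good (x : BA -> k) : inI x -> forall m, ~~ isI m -> x m = 0.
Proof.
move=> [cf hx] m hm; rewrite hx; apply: big1 => b _; apply: big1 => c _.
by rewrite -/(gen b c) gen_supp // mulr0.
Qed.

Lemma good_inI (x : BA -> k) : (forall m, ~~ isI m -> x m = 0) -> inI x.
Proof.
move=> hx; exists (fun b c => \sum_(m | isI m) x m * ((b == pp m)%:R * (c == qq m)%:R)).
move=> d; rewrite -/(gen _ _ _); symmetry.
transitivity (\sum_(b : BA) \sum_(c : BA) \sum_(m | isI m)
   (b == pp m)%:R * ((c == qq m)%:R * (x m * gen b c d))).
  apply: eq_bigr => b _; apply: eq_bigr => c _; rewrite mulr_suml.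
  apply: eq_bigr => m _; rewrite -/(gen _ _ _).
  by ring.
transitivity (\sum_(m | isI m) x m * gen (pp m) (qq m) d).
  rewrite exchange_big /=; under eq_bigr do rewrite exchange_big /=.
  rewrite exchange_big /=; apply: eq_bigr => m _; rewrite exchange_big /=.
  rewrite (eq_bigr (fun b => (b == pp m)%:R * \sum_(c : BA) (c == qq m)%:R * (x m * gen b c d))).
    by rewrite sift sift.
  by move=> b _; rewrite mulr_sumr.
under eq_bigr => m hm do rewrite gen_pq //.
case hd: (isI d).
  rewrite (bigD1 d) //= eqxx mulr1 big1 ?addr0 // => m /andP[_ hm].
  by rewrite eq_sym (negbTE hm) mulr0.
rewrite hx ?hd // big1 // => m hm.
by case: eqP => [e|]; [rewrite e hm in hd | rewrite mulr0].
Qed.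
End InI.

Lemma onth_lt (T : Type) (x0 : T) (s : seq T) j : (j < size s)%N -> onth s j = Some (nth x0 s j).
Proof. by elim: s j => [|x s IH] [|j] //= h; apply: IH. Qed.

Lemma merge_eq (T : eqType) (x0 : T) (t s : seq T) j c :
  size t = (size s).-1 -> (j.+1 < size s)%N ->
  (take j t == take j s) && (drop j.+1 t == drop j.+2 s) && (c == nth x0 t j)
  = (t == take j s ++ c :: drop j.+2 s).
Proof.
move=> ht hj.
have hjt : (j < size t)%N by rewrite ht -ltnS prednK // (leq_ltn_trans _ hj).
apply/idP/idP.
  move=> /andP[/andP[/eqP h1 /eqP h2] /eqP h3].
  by rewrite -h1 -h2 h3 -drop_nth // cat_take_drop.
move/eqP => ->.
have hs : size (take j s) = j by rewrite size_takel // ltnW // ltnW.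
rewrite take_size_cat // eqxx /=.
rewrite drop_cat hs ltnNge leqnSn /= subSnn /= drop0 eqxx /=.
by rewrite nth_cat hs ltnn subnn.
Qed.

Section Chains.
Variables (k : fieldType) (disp : Order.disp_t) (P : finPOrderType disp) (N : rep k P).
Local Notation IntP := (IntP P).
Local Notation BA := (BA P).
Local Notation BN := (BN N).
Local Notation chain := (chain N).
Local Notation ba0 := (@baz disp P).

Local Unset Implicit Arguments.
Definition ds e (n : BN) (s : seq BA) (m : BA) : chain e :=
  fun n' t' m' => ((n' == n) && (val t' == s) && (m' == m))%:R.
Definition cadd e (v w : chain e) : chain e := fun n t m => v n t m + w n t m.
Definition cscale e (c : k) (v : chain e) : chain e := fun n t m => c * v n t m.
Definition cz e : chain e := fun _ _ _ => 0.
Definition csum e (I : finType) (F : I -> chain e) : chain e :=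
  fun n t m => \sum_i F i n t m.
Definition omapc e (o : option BA) (f : BA -> chain e) : chain e :=
  if o is Some c then f c else cz e.
Local Set Implicit Arguments.
Arguments cadd {e}. Arguments cscale {e}. Arguments csum {e I}. Arguments omapc {e}.

Lemma bd_cadd d (v w : chain d.+1) : bd (cadd v w) = cadd (bd v) (bd w).
Proof.
apply: functional_extensionality => n'; apply: functional_extensionality => t'.
apply: functional_extensionality => m'.
rewrite /bd /cadd -big_split; apply: eq_bigr => n _; rewrite -big_split.
apply: eq_bigr => t _; rewrite -big_split; apply: eq_bigr => m _; by rewrite mulrDl.
Qed.

Lemma bd_cscale d c (v : chain d.+1) : bd (cscale c v) = cscale c (bd v).
Proof.
apply: functional_extensionality => n'; apply: functional_extensionality => t'.
apply: functional_extensionality => m'.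
rewrite /bd /cscale mulr_sumr; apply: eq_bigr => n _; rewrite mulr_sumr.
apply: eq_bigr => t _; rewrite mulr_sumr; apply: eq_bigr => m _; by rewrite mulrA.
Qed.

Lemma bd_cz d : bd (cz d.+1) = cz d.
Proof.
apply: functional_extensionality => n'; apply: functional_extensionality => t'.
apply: functional_extensionality => m'.
by rewrite /bd /cz big1 // => n _; rewrite big1 // => t _; rewrite big1 // => m _; rewrite mul0r.
Qed.

Lemma bd_csum d (I : finType) (F : I -> chain d.+1) :
  bd (csum F) = csum (fun i => bd (F i)).
Proof.
apply: functional_extensionality => n'; apply: functional_extensionality => t'.
apply: functional_extensionality => m'.
rewrite /bd /csum.
under eq_bigr => n _ do under eq_bigr => t _ do (under eq_bigr => m _ do rewrite mulr_suml; rewrite exchange_big /=).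
under eq_bigr => n _ do rewrite exchange_big /=.
by rewrite exchange_big.
Qed.

Lemma bd_omapc d o (f : BA -> chain d.+1) :
  bd (omapc o f) = omapc o (fun c => bd (f c)).
Proof. by case: o => [c|] //=; rewrite bd_cz. Qed.

Lemma natr_and (a b : bool) : ((a && b)%:R : k) = a%:R * b%:R.
Proof. by rewrite -mulnb natrM. Qed.

Lemma ds_sum e n s m (G : BN -> e.-tuple BA -> BA -> k) :
  \sum_n0 \sum_(t : e.-tuple BA) \sum_m0 ds e n s m n0 t m0 * G n0 t m0 =
  \sum_(t : e.-tuple BA) (val t == s)%:R * G n t m.
Proof.
transitivity (\sum_n0 (n0 == n)%:R * \sum_(t : e.-tuple BA) (val t == s)%:R *
    \sum_m0 (m0 == m)%:R * G n0 t m0).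
  apply: eq_bigr => n0 _; rewrite mulr_sumr; apply: eq_bigr => t _.
  rewrite !mulr_sumr; apply: eq_bigr => m0 _.
  by rewrite /ds !natr_and; ring.
rewrite sift; apply: eq_bigr => t _; by rewrite sift.
Qed.

Lemma tuple_sift e (s : seq BA) (hs : size s = e) (G : e.-tuple BA -> k) :
  \sum_(t : e.-tuple BA) (val t == s)%:R * G t =
  G (Tuple (introT eqP hs)).
Proof.
rewrite (bigD1 (Tuple (introT eqP hs))) //= eqxx mul1r big1 ?addr0 // => t ht.
case: eqP => [e1|]; last by rewrite mul0r.
by move: ht; rewrite -val_eqE /= e1 eqxx.
Qed.

Lemma bd_ds d n (s : seq BA) m (hs : size s = d.+1) :
  bd (ds d.+1 n s m) =
  cadd (cadd (csum (fun n'' => cscale (actN n (nth ba0 s 0) n'') (ds d n'' (behead s) m)))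
    (csum (fun j : 'I_d => cscale ((-1) ^+ j.+1)
       (omapc (prodA (nth ba0 s j) (nth ba0 s j.+1))
          (fun c => ds d n (take j s ++ c :: drop j.+2 s) m)))))
  (cscale ((-1) ^+ d.+1) (omapc (prodA (nth ba0 s d) m) (fun c => ds d n (take d s) c))).
Proof.
apply: functional_extensionality => n'; apply: functional_extensionality => t'.
apply: functional_extensionality => m'.
rewrite /bd ds_sum tuple_sift /bcoef /cadd /cscale /csum /=.
set T := Tuple _.
have hT : val T = s by [].
congr (_ + _ + _).
- rewrite (bigD1 n') //= big1 ?addr0; last first.
    by move=> n0 hn; rewrite /ds eq_sym (negbTE hn) mulr0.
  by rewrite /ds eqxx /thead (tnth_nth ba0) hT.
- apply: eq_bigr => j _; congr (_ * _).
  have hj : (j < size s)%N by rewrite hs ltnW // ltnS.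
  have hj1 : (j.+1 < size s)%N by rewrite hs ltnS.
  have h1 := onth_lt ba0 hj1; rewrite /= in h1.
  rewrite (onth_lt ba0 hj) h1 (onth_lt ba0 (_ : (j < size t')%N)); last first.
    by rewrite size_tuple.
  rewrite /= mulA_prodA.
  case: (prodA _ _) => [c|] /=; last by rewrite mulr0.
  rewrite /ds -natrM; congr (_%:R).
  rewrite -(merge_eq ba0 (t:=t') (s:=s) c _ hj1); last by rewrite size_tuple hs.
  rewrite [Some c == _]/eq_op /=.
  by case: (n' == n); case: (m' == m); case: (take _ _ == _); case: (drop _ _ == _); case: (c == _).
- congr (_ * _); rewrite /= (tnth_nth ba0) hT mulA_prodA.
  case: (prodA _ _) => [c|] /=; last by rewrite mulr0.
  rewrite /ds -natrM; congr (_%:R).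
  rewrite [Some c == _]/eq_op /= [c == _]eq_sym.
  by case: (n' == n); case: (m' == c); case: (_ == _).
Qed.

End Chains.
Arguments omapc {k disp P N e}. Arguments cadd {k disp P N e}. Arguments cscale {k disp P N e}.
Arguments csum {k disp P N e I}. Arguments cz {k disp P N} e. Arguments ds {k disp P N} e.

Section Homotopy.
Variables (k : fieldType) (disp : Order.disp_t) (P : finPOrderType disp) (N : rep k P).
Local Notation IntP := (IntP P).
Local Notation BA := (BA P).
Local Notation BN := (BN N).
Local Notation chain := (chain N).
Local Notation ba0 := (@baz disp P).

Local Unset Implicit Arguments.
Definition kap e (n : BN) (s : seq BA) (m : BA) : chain e.+1 :=
  match s with
  | [::] => cz e.+1
  | x :: s1 => omapc (prodA (last x s1) m) (fun c => if isI c then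
       ds e.+1 n (rcons (rcons (belast x s1) (pp c)) (qq c)) (Em m) else cz e.+1)
  end.

Definition Hd e (n : BN) (s : seq BA) (m : BA) : chain e.+1 :=
  if (size s == e) && ~~ isI m then
    cscale ((-1) ^+ e.+1) (cadd (ds e.+1 n (rcons s m) (Em m)) (cscale (-1) (kap e n s m)))
  else cz e.+1.

Definition Hv e (v : chain e) : chain e.+1 := fun n t m =>
  \sum_n0 \sum_(t0 : e.-tuple BA) \sum_m0 v n0 t0 m0 * Hd e n0 (val t0) m0 n t m.
Local Set Implicit Arguments.
Arguments Hv {e}.

Lemma kap_rcons e n s0 a m : kap e n (rcons s0 a) m =
  omapc (prodA a m) (fun c => if isI c then
       ds e.+1 n (rcons (rcons s0 (pp c)) (qq c)) (Em m) else cz e.+1).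
Proof.
rewrite /kap; case hs: (rcons s0 a) => [|x s1]; first by case: s0 hs.
have := lastI x s1; rewrite -hs => /rcons_inj [-> ->] //.
Qed.

Lemma kap_nil e n m : kap e n [::] m = cz e.+1.
Proof. by []. Qed.

Lemma Hv_cadd e (v w : chain e) : Hv (cadd v w) = cadd (Hv v) (Hv w).
Proof.
apply: functional_extensionality => n'; apply: functional_extensionality => t'.
apply: functional_extensionality => m'.
rewrite /Hv /cadd -big_split; apply: eq_bigr => n _; rewrite -big_split.
apply: eq_bigr => t _; rewrite -big_split; apply: eq_bigr => m _; by rewrite mulrDl.
Qed.

Lemma Hv_cscale e c (v : chain e) : Hv (cscale c v) = cscale c (Hv v).
Proof.
apply: functional_extensionality => n'; apply: functional_extensionality => t'.
apply: functional_extensionality => m'.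
rewrite /Hv /cscale mulr_sumr; apply: eq_bigr => n _; rewrite mulr_sumr.
apply: eq_bigr => t _; rewrite mulr_sumr; apply: eq_bigr => m _; by rewrite mulrA.
Qed.

Lemma Hv_cz e : Hv (cz e) = cz e.+1.
Proof.
apply: functional_extensionality => n'; apply: functional_extensionality => t'.
apply: functional_extensionality => m'.
by rewrite /Hv /cz big1 // => n _; rewrite big1 // => t _; rewrite big1 // => m _; rewrite mul0r.
Qed.

Lemma Hv_csum e (I : finType) (F : I -> chain e) :
  Hv (csum F) = csum (fun i => Hv (F i)).
Proof.
apply: functional_extensionality => n'; apply: functional_extensionality => t'.
apply: functional_extensionality => m'.
rewrite /Hv /csum.
under eq_bigr => n _ do under eq_bigr => t _ do (under eq_bigr => m _ do rewrite mulr_suml; rewrite exchange_big /=).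
under eq_bigr => n _ do rewrite exchange_big /=.
by rewrite exchange_big.
Qed.

Lemma Hv_omapc e o (f : BA -> chain e) :
  Hv (omapc o f) = omapc o (fun c => Hv (f c)).
Proof. by case: o => [c|] //=; rewrite Hv_cz. Qed.

Lemma Hv_ds e n s m : Hv (ds e n s m) = Hd e n s m.
Proof.
apply: functional_extensionality => n'; apply: functional_extensionality => t'.
apply: functional_extensionality => m'.
rewrite /Hv ds_sum.
case hs: (size s == e).
  by rewrite (tuple_sift (eqP hs) (fun t => Hd e n (val t) m n' t' m')).
rewrite big1; last first.
  move=> t _; case: eqP => [ht|]; last by rewrite mul0r.
  by move: hs; rewrite -ht size_tuple eqxx.
by rewrite /Hd hs.
Qed.

End Homotopy.
Arguments Hd {k disp P N} e. Arguments kap {k disp P N} e. Arguments Hv {k disp P N e}.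

Section Aux.
Variables (disp : Order.disp_t) (P : finPOrderType disp).
Local Notation BA := (BA P).

Lemma BA_ext (b c : BA) : src b = src c -> tgt b = tgt c -> b = c.
Proof. by move=> h1 h2; apply/eqP; rewrite BA_eq h1 h2 !eqxx. Qed.

Lemma prodA_None (b c : BA) : (prodA b c == None) = (tgt b != src c).
Proof. by rewrite /prodA; case: (tgt b =P src c). Qed.

Lemma prodA_def (b c : BA) : tgt b = src c ->
  exists2 d, prodA b c = Some d & src d = src b /\ tgt d = tgt c.
Proof.
move=> h; case e: (prodA b c) => [d|]; last by move: (e); rewrite /prodA h eqxx.
by exists d => //; have [_ ? ?] := prodA_Some e.
Qed.

Lemma isI_prod (b c d : BA) : prodA b c = Some d -> isI c -> isI d.
Proof.
move=> /prodA_Some [t1 s1 u1]; rewrite /isI s1 u1 => h.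
have /andP[_ l] := leQ_st b.
apply: leinf_trans l _; rewrite t1.
exact: h.
Qed.
End Aux.

Section SeqAux.
Variable T : Type.
Implicit Types (s : seq T) (x c : T).

Lemma behead_rcons s x : (0 < size s)%N -> behead (rcons s x) = rcons (behead s) x.
Proof. by case: s. Qed.

Lemma nth_rcons_lt x0 s x i : (i < size s)%N -> nth x0 (rcons s x) i = nth x0 s i.
Proof. by move=> h; rewrite nth_rcons h. Qed.

Lemma take_rcons_le s x i : (i <= size s)%N -> take i (rcons s x) = take i s.
Proof.
move=> h; rewrite -cats1 take_cat; case: ltnP => // h2.
have -> : i = size s by apply/eqP; rewrite eqn_leq h h2.
by rewrite subnn take0 cats0 take_size.
Qed.

Lemma merge_rcons s x j c : (j.+2 <= size s)%N ->
  take j (rcons s x) ++ c :: drop j.+2 (rcons s x) = rcons (take j s ++ c :: drop j.+2 s) x.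
Proof.
move=> h; rewrite (take_rcons_le _ (ltnW (ltnW h))) (drop_rcons h).
by rewrite rcons_cat.
Qed.

Lemma merge_last s0 a x c :
  take (size s0) (rcons (rcons s0 a) x) ++ c :: drop (size s0).+2 (rcons (rcons s0 a) x)
  = rcons s0 c.
Proof.
rewrite take_rcons_le ?size_rcons // take_rcons_le // take_size.
rewrite drop_oversize ?size_rcons // cats1 //.
Qed.
End SeqAux.

Definition oval (k : fieldType) (disp : Order.disp_t) (P : finPOrderType disp)
  (o : option (BA P)) (f : BA P -> k) : k := if o is Some c then f c else 0.

Lemma oval_None (k : fieldType) (disp : Order.disp_t) (P : finPOrderType disp) (f : BA P -> k) :
  oval None f = 0.
Proof. by []. Qed.
Lemma oval_Some (k : fieldType) (disp : Order.disp_t) (P : finPOrderType disp) (f : BA P -> k) c :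
  oval (Some c) f = f c.
Proof. by []. Qed.

Section Core.
Variables (k : fieldType) (disp : Order.disp_t) (P : finPOrderType disp) (N : rep k P).
Local Notation IntP := (IntP P).
Local Notation BA := (BA P).
Local Notation BN := (BN N).
Local Notation chain := (chain N).
Local Notation ba0 := (@baz disp P).

Lemma omapc_eval e o (f : BA -> chain e) n t m :
  omapc o f n t m = oval o (fun c => f c n t m).
Proof. by case: o. Qed.

Lemma actN_diag
  (hN : forall s t : IntP, leinf (val s).2 (val t).1 -> rmap N s t = 0)
  (n n'' : BN) (p : BA) : (val (tgt p)).1 = (val (tgt p)).2 -> actN n p n'' = 0.
Proof.
move=> hdg; rewrite /actN; case: andP => [[_ /eqP ht]|] //.
exfalso.
have hz : rmap N (tag n'') (tag n'') = 0.
  by apply: hN; rewrite ht -hdg leinf_refl.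
have := rmap_id N (tag n''); rewrite hz => h.
move: (congr1 (fun M : 'M[k]_(rdim N (tag n'')) => M (tagged n'') (tagged n'')) h).
by rewrite !mxE eqxx /= => /eqP; rewrite eq_sym oner_eq0.
Qed.

Local Unset Implicit Arguments.
Definition sig e (n : BN) (s : seq BA) (m : BA) : chain e.+1 := ds e.+1 n (rcons s m) (Em m).
Local Set Implicit Arguments.

Lemma Hd_eval e n s m n' t' m' : size s = e -> ~~ isI m ->
  Hd e n s m n' t' m' = (-1) ^+ e.+1 * (sig e n s m n' t' m' - kap e n s m n' t' m').
Proof. by rewrite /Hd => /eqP -> ->; rewrite /= /cscale /cadd /sig; ring. Qed.


Lemma mulr_congr (a b c d : k) : a = c -> b = d -> a * b = c * d.
Proof. by move=> -> ->. Qed.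

Lemma congr4 (a b c d a' b' c' d' : k) :
  a = a' -> b = b' -> c = c' -> d = d' -> a + (b + c) + d = a' + b' + c' + d'.
Proof. by move=> -> -> -> ->; rewrite addrA. Qed.

Lemma Em_tgt (b c : BA) : tgt b = tgt c -> Em b = Em c.
Proof. by rewrite /Em => ->. Qed.


Lemma nth_last (s0 : seq BA) a x : nth x (rcons s0 a) (size s0) = a.
Proof. by rewrite nth_rcons ltnn eqxx. Qed.

Lemma nth_last' (s0 : seq BA) a x e : size s0 = e -> nth x (rcons s0 a) e = a.
Proof. by move=> <-; apply: nth_last. Qed.

Lemma merge_last' (s0 : seq BA) a x c e : size s0 = e ->
  take e (rcons (rcons s0 a) x) ++ c :: drop e.+2 (rcons (rcons s0 a) x) = rcons s0 c.
Proof. by move=> <-; apply: merge_last. Qed.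

Lemma bd_sig_eval e n0 s0 a m0 n' (t' : e.+1.-tuple BA) m' (hs0 : size s0 = e) :
  bd (ds e.+2 n0 (rcons (rcons s0 a) m0) (Em m0)) n' t' m' =
   \sum_n'' actN n0 (nth ba0 (rcons s0 a) 0) n'' * sig e n'' (behead (rcons s0 a)) m0 n' t' m'
   + \sum_(j < e) (-1)^+j.+1 * oval (prodA (nth ba0 (rcons s0 a) j) (nth ba0 (rcons s0 a) j.+1))
        (fun c => sig e n0 (take j (rcons s0 a) ++ c :: drop j.+2 (rcons s0 a)) m0 n' t' m')
   + (-1)^+e.+1 * oval (prodA a m0) (fun c => sig e n0 s0 c n' t' m')
   + (-1)^+e.+2 * ds e.+1 n0 (rcons s0 a) m0 n' t' m'.
Proof.
have hs : size (rcons s0 a) = e.+1 by rewrite size_rcons hs0.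
rewrite bd_ds; last by rewrite !size_rcons hs0.
rewrite /cadd /csum /cscale; cbv beta.
rewrite (@omapc_eval e.+1).
under [X in _ + X + _]eq_bigr do rewrite (@omapc_eval e.+1).
rewrite big_ord_recr /=.
apply: congr4.
- apply: eq_bigr => n'' _; rewrite nth_rcons_lt ?hs // behead_rcons ?hs //.
- apply: eq_bigr => j _; congr (_ * _).
  have hj : (j.+2 <= size (rcons s0 a))%N by rewrite hs ltnS.
  have hj1 : (j.+1 < size (rcons s0 a))%N := hj.
  rewrite (@nth_rcons_lt _ ba0 (rcons s0 a) m0 j) ?(ltnW hj1) //.
  rewrite (@nth_rcons_lt _ ba0 (rcons s0 a) m0 j.+1) //.
  by case: (prodA _ _) => [c|] //=; rewrite merge_rcons.
- have n1 : nth ba0 (rcons (rcons s0 a) m0) e = a.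
    by rewrite nth_rcons_lt ?hs // nth_last'.
  have n2 : nth ba0 (rcons (rcons s0 a) m0) e.+1 = m0 by rewrite nth_last'.
  rewrite n1 n2; apply: mulr_congr; first by [].
  case e1: (prodA a m0) => [c|]; last by rewrite [in LHS]oval_None [in RHS]oval_None.
  have [_ _ u] := prodA_Some e1.
  by rewrite [in LHS]oval_Some [in RHS]oval_Some /sig (merge_last' _ _ _ hs0) (Em_tgt u).
- rewrite (nth_last' _ _ hs) prodA_Em oval_Some.
  by rewrite take_rcons_le ?hs // take_oversize ?hs.
Qed.

Lemma isI_prodl (b c d : BA) : prodA b c = Some d -> isI b -> isI d.
Proof.
move=> /prodA_Some [t1 s1 u1]; rewrite /isI s1 u1 => h.
apply: leinf_trans h _; rewrite t1.
by have /andP[l _] := leQ_st c.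
Qed.

Lemma ds_mneq e (n : BN) s m (n' : BN) (t' : e.-tuple BA) m' : m' != m -> ds e n s m n' t' m' = 0.
Proof. by move=> /negbTE h; rewrite /ds h andbF. Qed.

Lemma congr4z (a b c d a' b' c' : k) :
  a = a' -> b = b' -> c = c' -> d = 0 -> a + (b + c) + d = a' + b' + c'.
Proof. by move=> -> -> -> ->; rewrite addr0 addrA. Qed.

Lemma congr3 (a b c a' b' c' : k) :
  a = a' -> b = b' -> c = c' -> a + b + c = a' + b' + c'.
Proof. by move=> -> -> ->. Qed.

Lemma bd_kap_eval e (n0 : BN) s0 c E (n' : BN) (t' : e.+1.-tuple BA) m' (hs0 : size s0 = e) :
  isI c -> ~~ isI m' ->
  bd (ds e.+2 n0 (rcons (rcons s0 (pp c)) (qq c)) E) n' t' m' =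
   \sum_n'' actN n0 (nth ba0 (rcons (rcons s0 (pp c)) (qq c)) 0) n'' *
        ds e.+1 n'' (behead (rcons (rcons s0 (pp c)) (qq c))) E n' t' m'
   + \sum_(j < e) (-1)^+j.+1 * oval (prodA (nth ba0 (rcons (rcons s0 (pp c)) (qq c)) j)
                                           (nth ba0 (rcons (rcons s0 (pp c)) (qq c)) j.+1))
        (fun c' => ds e.+1 n0 (take j (rcons (rcons s0 (pp c)) (qq c)) ++ c' ::
                        drop j.+2 (rcons (rcons s0 (pp c)) (qq c))) E n' t' m')
   + (-1)^+e.+1 * ds e.+1 n0 (rcons s0 c) E n' t' m'.
Proof.
move=> hc hm'.
have hs : size (rcons s0 (pp c)) = e.+1 by rewrite size_rcons hs0.
rewrite bd_ds; last by rewrite !size_rcons hs0.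
rewrite /cadd /csum /cscale; cbv beta.
rewrite (@omapc_eval e.+1).
under [X in _ + X + _]eq_bigr do rewrite (@omapc_eval e.+1).
rewrite big_ord_recr /=.
apply: congr4z.
- by [].
- by [].
- have n1 : nth ba0 (rcons (rcons s0 (pp c)) (qq c)) e = pp c.
    by rewrite nth_rcons_lt ?hs // nth_last'.
  have n2 : nth ba0 (rcons (rcons s0 (pp c)) (qq c)) e.+1 = qq c by rewrite nth_last'.
  rewrite n1 n2 prodA_pq // [in LHS]oval_Some.
  by rewrite (merge_last' _ _ _ hs0).
- rewrite (nth_last' _ _ hs).
  case e1: (prodA (qq c) E) => [c''|]; last by rewrite oval_None mulr0.
  rewrite oval_Some ds_mneq ?mulr0 //.
  apply: contraNneq hm' => ->; apply: isI_prodl e1 _; exact: isI_qq.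
Qed.

Lemma HB_eval e (n0 : BN) s0 a m0 (n' : BN) (t' : e.+1.-tuple BA) m' (hs0 : size s0 = e) :
  ~~ isI m0 ->
  Hv (bd (ds e.+1 n0 (rcons s0 a) m0)) n' t' m' =
   \sum_n'' actN n0 (nth ba0 (rcons s0 a) 0) n'' *
      ((-1)^+e.+1 * (sig e n'' (behead (rcons s0 a)) m0 n' t' m'
                      - kap e n'' (behead (rcons s0 a)) m0 n' t' m'))
   + \sum_(j < e) (-1)^+j.+1 * oval (prodA (nth ba0 (rcons s0 a) j) (nth ba0 (rcons s0 a) j.+1))
        (fun c => (-1)^+e.+1 *
           (sig e n0 (take j (rcons s0 a) ++ c :: drop j.+2 (rcons s0 a)) m0 n' t' m'
            - kap e n0 (take j (rcons s0 a) ++ c :: drop j.+2 (rcons s0 a)) m0 n' t' m'))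
   + (-1)^+e.+1 * oval (prodA a m0) (fun c => Hd e n0 s0 c n' t' m').
Proof.
move=> hm0.
have hs : size (rcons s0 a) = e.+1 by rewrite size_rcons hs0.
rewrite (bd_ds _ _ hs) Hv_cadd Hv_cadd Hv_csum Hv_csum Hv_cscale Hv_omapc.
rewrite /cadd /csum /cscale; cbv beta.
rewrite (@omapc_eval e.+1).
apply: congr3.
- apply: eq_bigr => n'' _; rewrite Hv_cscale /cscale Hv_ds Hd_eval //.
  by rewrite size_behead hs.
- apply: eq_bigr => j _; rewrite Hv_cscale /cscale Hv_omapc (@omapc_eval e.+1).
  apply: mulr_congr; first by [].
  case: (prodA _ _) => [c|]; last by rewrite [in LHS]oval_None [in RHS]oval_None.
  rewrite [in LHS]oval_Some [in RHS]oval_Some Hv_ds Hd_eval //.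
  have hj := ltn_ord j.
  rewrite size_cat /= size_drop hs size_takel; last by rewrite hs; lia.
  lia.
- apply: mulr_congr; first by [].
  rewrite (nth_last' _ _ hs0) take_rcons_le ?hs0 // take_oversize ?hs0 //.
  case: (prodA _ _) => [c|]; last by rewrite [in LHS]oval_None [in RHS]oval_None.
  by rewrite [in LHS]oval_Some [in RHS]oval_Some Hv_ds.
Qed.

Lemma oval0 (o : option BA) : oval o (fun _ => (0 : k)) = 0.
Proof. by case: o. Qed.

Lemma bd_kap_full e (n0 : BN) s0 a m0 (n' : BN) (t' : e.+1.-tuple BA) m' :
  bd (kap e.+1 n0 (rcons s0 a) m0) n' t' m' =
  oval (prodA a m0) (fun c => if isI c then
     bd (ds e.+2 n0 (rcons (rcons s0 (pp c)) (qq c)) (Em m0)) n' t' m' else 0).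
Proof.
rewrite kap_rcons bd_omapc (@omapc_eval e.+1).
case: (prodA a m0) => [c|]; last by rewrite [in LHS]oval_None [in RHS]oval_None.
rewrite [in LHS]oval_Some [in RHS]oval_Some.
by case: (isI c) => //; rewrite bd_cz.
Qed.

Lemma src_pp (c : BA) : isI c -> src (pp c) = src c.
Proof. by move=> h; rewrite /pp src_mkBA // leQ_pp. Qed.
Lemma tgt_pp (c : BA) : isI c -> tgt (pp c) = zhat (tgt c).
Proof. by move=> h; rewrite /pp tgt_mkBA // leQ_pp. Qed.
Lemma src_qq (c : BA) : src (qq c) = zhat (tgt c).
Proof. by rewrite /qq src_mkBA // leQ_qq. Qed.
Lemma tgt_qq (c : BA) : tgt (qq c) = tgt c.
Proof. by rewrite /qq tgt_mkBA // leQ_qq. Qed.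

Lemma RKA0
  (hN : forall s t : IntP, leinf (val s).2 (val t).1 -> rmap N s t = 0)
  e (n0 : BN) s0 a m0 (n' : BN) (t' : e.+1.-tuple BA) m' (hs0 : size s0 = e) :
  \sum_n'' actN n0 (nth ba0 (rcons s0 a) 0) n'' * kap e n'' (behead (rcons s0 a)) m0 n' t' m'
  = oval (prodA a m0) (fun c => if isI c then
      \sum_n'' actN n0 (nth ba0 (rcons (rcons s0 (pp c)) (qq c)) 0) n'' *
        ds e.+1 n'' (behead (rcons (rcons s0 (pp c)) (qq c))) (Em m0) n' t' m' else 0).
Proof.
case: s0 hs0 => [|x s1] hs0.
  rewrite /= big1; last by move=> n'' _; rewrite ?kap_nil /cz mulr0.
  case: (prodA a m0) => [c|]; last by rewrite [in RHS]oval_None.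
  rewrite [in RHS]oval_Some; case hc: (isI c) => //.
  rewrite big1 // => n'' _; rewrite /= actN_diag ?mul0r //.
  by rewrite tgt_pp.
rewrite /=.
under eq_bigr do rewrite kap_rcons (@omapc_eval e.+1).
case: (prodA a m0) => [c|]; last first.
  by rewrite [in RHS]oval_None big1 // => n'' _; rewrite oval_None mulr0.
rewrite [in RHS]oval_Some; under eq_bigr do rewrite oval_Some.
case: (isI c) => //.
by rewrite big1 // => n'' _; rewrite /cz mulr0.
Qed.

Lemma F1 (a a' m0 c' : BA) : prodA a m0 = None -> prodA a' a = Some c' -> prodA c' m0 = None.
Proof.
move=> h1 /prodA_Some [_ _ u]; apply/eqP; rewrite prodA_None u -prodA_None; exact/eqP.
Qed.

Lemma F2a (a a' m0 c : BA) : prodA a m0 = Some c -> prodA a' a = None -> prodA a' c = None.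
Proof.
move=> /prodA_Some [_ s1 _] /eqP h; apply/eqP; rewrite prodA_None s1 -prodA_None; exact: h.
Qed.

Lemma F2b (a a' m0 c : BA) : isI c -> prodA a m0 = Some c -> prodA a' a = None ->
  prodA a' (pp c) = None.
Proof.
move=> hc /prodA_Some [_ s1 _] /eqP h; apply/eqP.
by rewrite prodA_None src_pp // s1 -prodA_None.
Qed.

Lemma F3 (a a' m0 c c' : BA) : prodA a m0 = Some c -> prodA a' a = Some c' ->
  exists f, prodA c' m0 = Some f /\ prodA a' c = Some f.
Proof.
move=> h1 h2; have [t1 s1 u1] := prodA_Some h1; have [t2 s2 u2] := prodA_Some h2.
have e1 : tgt c' = src m0 by rewrite u2.
have e2 : tgt a' = src c by rewrite s1.
have [f hf [sf tf]] := prodA_def e1.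
have [g hg [sg tg]] := prodA_def e2.
exists f; split => //; rewrite hg; congr Some; apply: BA_ext.
- by rewrite sg sf s2.
- by rewrite tg tf u1.
Qed.

Lemma F3b (a' c f : BA) : isI c -> prodA a' c = Some f -> prodA a' (pp c) = Some (pp f).
Proof.
move=> hc hf; have hfI := isI_prod hf hc.
have [t1 s1 u1] := prodA_Some hf.
have e2 : tgt a' = src (pp c) by rewrite src_pp.
have [g hg [sg tg]] := prodA_def e2.
rewrite hg; congr Some; apply: BA_ext.
- by rewrite sg src_pp // s1.
- by rewrite tg tgt_pp // tgt_pp // u1.
Qed.

Lemma qq_tgt (b c : BA) : tgt b = tgt c -> qq b = qq c.
Proof. by rewrite /qq => ->. Qed.

Lemma merge_mid (s1 : seq BA) x y z c :
  take (size s1) (rcons (rcons (rcons s1 x) y) z) ++ c :: drop (size s1).+2 (rcons (rcons (rcons s1 x) y) z)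
  = rcons (rcons s1 c) z.
Proof.
by elim: s1 => //= x0 s IH; rewrite IH.
Qed.

Lemma congr2a (a b a' b' : k) : a = a' -> b = b' -> a + b = a' + b'.
Proof. by move=> -> ->. Qed.

Lemma RKB1 e (n0 : BN) s0 a m0 (n' : BN) (t' : e.+1.-tuple BA) m' (hs0 : size s0 = e) :
  \sum_(j < e) (-1)^+j.+1 * oval (prodA (nth ba0 (rcons s0 a) j) (nth ba0 (rcons s0 a) j.+1))
      (fun c' => kap e n0 (take j (rcons s0 a) ++ c' :: drop j.+2 (rcons s0 a)) m0 n' t' m')
  = oval (prodA a m0) (fun c => if isI c then
      \sum_(j < e) (-1)^+j.+1 *
        oval (prodA (nth ba0 (rcons (rcons s0 (pp c)) (qq c)) j)
                    (nth ba0 (rcons (rcons s0 (pp c)) (qq c)) j.+1))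
        (fun c' => ds e.+1 n0 (take j (rcons (rcons s0 (pp c)) (qq c)) ++ c' ::
                     drop j.+2 (rcons (rcons s0 (pp c)) (qq c))) (Em m0) n' t' m')
    else (-1)^+e * kap e n0 s0 c n' t' m').
Proof.
case/lastP: s0 hs0 => [|s1 a'] hs0.
  move: hs0 => /= hs0; subst e.
  rewrite big_ord0.
  case: (prodA a m0) => [c|]; last by rewrite [in RHS]oval_None.
  rewrite [in RHS]oval_Some; case: (isI c); first by rewrite big_ord0.
  by rewrite ?kap_nil /cz mulr0.
rewrite size_rcons in hs0; subst e.
have hS : size (rcons s1 a') = (size s1).+1 := size_rcons _ _.
have nS j : (j < (size s1).+1)%N ->
    nth ba0 (rcons (rcons s1 a') a) j = nth ba0 (rcons s1 a') j.
  by move=> hj; rewrite nth_rcons_lt ?hS.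
have nU j c : (j < (size s1).+1)%N ->
    nth ba0 (rcons (rcons (rcons s1 a') (pp c)) (qq c)) j = nth ba0 (rcons s1 a') j.
  move=> hj; rewrite nth_rcons_lt; last by rewrite size_rcons hS; lia.
  by rewrite nth_rcons_lt // hS.
have mS (j : nat) c' : (j < size s1)%N ->
    take j (rcons (rcons s1 a') a) ++ c' :: drop j.+2 (rcons (rcons s1 a') a) =
    rcons (take j (rcons s1 a') ++ c' :: drop j.+2 (rcons s1 a')) a.
  by move=> hj; rewrite merge_rcons // hS; lia.
have mU (j : nat) c c' : (j < size s1)%N ->
    take j (rcons (rcons (rcons s1 a') (pp c)) (qq c)) ++ c' ::
      drop j.+2 (rcons (rcons (rcons s1 a') (pp c)) (qq c)) =
    rcons (rcons (take j (rcons s1 a') ++ c' :: drop j.+2 (rcons s1 a')) (pp c)) (qq c).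
  move=> hj; rewrite merge_rcons; last by rewrite size_rcons hS; lia.
  by rewrite merge_rcons // hS.
have la1 : nth ba0 (rcons (rcons s1 a') a) (size s1) = a'.
  by rewrite nS // nth_last.
have la2 : nth ba0 (rcons (rcons s1 a') a) (size s1).+1 = a.
  by rewrite -hS nth_last.
have lU1 c : nth ba0 (rcons (rcons (rcons s1 a') (pp c)) (qq c)) (size s1) = a'.
  by rewrite nU // nth_last.
have lU2 c : nth ba0 (rcons (rcons (rcons s1 a') (pp c)) (qq c)) (size s1).+1 = pp c.
  rewrite nth_rcons_lt; last by rewrite size_rcons hS; lia.
  by rewrite -hS nth_last.
rewrite big_ord_recr /= la1 la2.
case e1: (prodA a m0) => [c|].
  rewrite [in RHS]oval_Some; case hc: (isI c).
    rewrite big_ord_recr /= lU1 lU2.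
    apply: congr2a.
      apply: eq_bigr => j _.
      have hj := ltn_ord j.
      rewrite nS ?nS ?nU ?nU; try lia.
      apply: mulr_congr; first by [].
      case: (prodA _ _) => [c'|]; last by rewrite [in LHS]oval_None [in RHS]oval_None.
      rewrite [in LHS]oval_Some [in RHS]oval_Some mS // mU //.
      by rewrite kap_rcons (@omapc_eval (size s1).+2) e1 oval_Some hc.
    apply: mulr_congr; first by [].
    case e2: (prodA a' a) => [c'|]; last first.
      by rewrite (F2b hc e1 e2) [in LHS]oval_None [in RHS]oval_None.
    have [f [hf1 hf2]] := F3 e1 e2.
    have [_ _ uf] := prodA_Some hf2.
    rewrite (F3b hc hf2) [in LHS]oval_Some [in RHS]oval_Some merge_last merge_mid.
    rewrite kap_rcons (@omapc_eval (size s1).+2) hf1 oval_Some (isI_prod hf2 hc).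
    by rewrite (qq_tgt uf).
  rewrite big1 ?add0r; last first.
    move=> j _; have hj := ltn_ord j.
    rewrite nS ?nS; try lia.
    case: (prodA _ _) => [c'|]; last by rewrite oval_None mulr0.
    rewrite oval_Some mS // kap_rcons (@omapc_eval (size s1).+2) e1 oval_Some hc.
    by rewrite /cz mulr0.
  apply: mulr_congr; first by [].
  rewrite kap_rcons (@omapc_eval (size s1).+2).
  have [_ _ u1] := prodA_Some e1.
  case e2: (prodA a' a) => [c'|]; last first.
    by rewrite (F2a e1 e2) [in LHS]oval_None [in RHS]oval_None.
  have [f [hf1 hf2]] := F3 e1 e2.
  rewrite hf2 [in LHS]oval_Some [in RHS]oval_Some merge_last.
  rewrite kap_rcons (@omapc_eval (size s1).+2) hf1 oval_Some.
  by rewrite (Em_tgt u1).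
rewrite [in RHS]oval_None big1 ?add0r; last first.
  move=> j _; have hj := ltn_ord j.
  rewrite nS ?nS; try lia.
  case: (prodA _ _) => [c'|]; last by rewrite oval_None mulr0.
  by rewrite oval_Some mS // kap_rcons (@omapc_eval (size s1).+2) e1 oval_None mulr0.
case e2: (prodA a' a) => [c'|]; last by rewrite oval_None mulr0.
by rewrite oval_Some merge_last kap_rcons (@omapc_eval (size s1).+2) (F1 e1 e2) oval_None mulr0.
Qed.

Lemma bd_ds_I d (n0 : BN) s m0 : isI m0 -> size s = d.+1 ->
  forall n t m, ~~ isI m -> bd (ds d.+1 n0 s m0) n t m = 0.
Proof.
move=> hm0 hs n t m hm.
have hne : m != m0 by apply: contraNneq hm => ->.
rewrite (bd_ds _ _ hs) /cadd /csum /cscale; cbv beta.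
rewrite (@omapc_eval d) big1 ?add0r; last by move=> n'' _; rewrite ds_mneq // mulr0.
rewrite big1 ?add0r; last first.
  move=> j _; rewrite (@omapc_eval d).
  case: (prodA _ _) => [c|]; last by rewrite oval_None mulr0.
  by rewrite oval_Some ds_mneq // mulr0.
case e1: (prodA _ _) => [c|]; last by rewrite oval_None mulr0.
rewrite oval_Some ds_mneq ?mulr0 //.
by apply: contraNneq hm => ->; apply: isI_prod e1 hm0.
Qed.

Lemma Hv_good e (w : chain e) : (forall n t m, ~~ isI m -> w n t m = 0) ->
  forall n t m, Hv w n t m = 0.
Proof.
move=> hw n t m; rewrite /Hv; apply: big1 => n0 _; apply: big1 => t0 _; apply: big1 => m0 _.
case hm0: (isI m0); first by rewrite /Hd hm0 andbF /cz mulr0.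
by rewrite hw ?hm0 // mul0r.
Qed.

Lemma sum_split (I : finType) (x y z : I -> k) c :
  \sum_i x i * (c * (y i - z i)) = c * (\sum_i x i * y i - \sum_i x i * z i).
Proof.
rewrite -sumrB mulr_sumr; apply: eq_bigr => i _; ring.
Qed.

Lemma oval_split (I : finType) (x : I -> k) (o : I -> option BA) (Y Z : I -> BA -> k) c :
  \sum_i x i * oval (o i) (fun b => c * (Y i b - Z i b)) =
  c * (\sum_i x i * oval (o i) (Y i) - \sum_i x i * oval (o i) (Z i)).
Proof.
rewrite -sumrB mulr_sumr; apply: eq_bigr => i _.
case: (o i) => [b|]; rewrite ?oval_Some ?oval_None; ring.
Qed.

Lemma core
  (hN : forall s t : IntP, leinf (val s).2 (val t).1 -> rmap N s t = 0)
  e (n0 : BN) s0 a m0 (n' : BN) (t' : e.+1.-tuple BA) m' (hs0 : size s0 = e) :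
  ~~ isI m' ->
  bd (Hd e.+1 n0 (rcons s0 a) m0) n' t' m' + Hv (bd (ds e.+1 n0 (rcons s0 a) m0)) n' t' m'
  = ds e.+1 n0 (rcons s0 a) m0 n' t' m'.
Proof.
move=> hm'.
have hs : size (rcons s0 a) = e.+1 by rewrite size_rcons hs0.
case hm0: (isI m0).
  rewrite /Hd hm0 andbF bd_cz /cz add0r.
  rewrite Hv_good; last by apply: bd_ds_I.
  by rewrite ds_mneq //; apply: contraNneq hm' => ->; rewrite hm0.
have -> : Hd e.+1 n0 (rcons s0 a) m0 = cscale ((-1) ^+ e.+2)
    (cadd (ds e.+2 n0 (rcons (rcons s0 a) m0) (Em m0)) (cscale (-1) (kap e.+1 n0 (rcons s0 a) m0))).
  by rewrite /Hd hs eqxx hm0.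
rewrite bd_cscale bd_cadd bd_cscale /cscale /cadd; cbv beta.
rewrite bd_sig_eval // bd_kap_full HB_eval ?hm0 //.
rewrite sum_split oval_split RKA0 // RKB1 //.
set SA0 := \sum_n'' _ * sig _ _ _ _ _ _ _.
set SB1 := \sum_(j < e) _ * oval _ (fun c => sig _ _ _ _ _ _ _).
set D := ds e.+1 n0 (rcons s0 a) m0 n' t' m'.
case e1: (prodA a m0) => [c|]; rewrite /oval; cbv beta iota; last first.
  rewrite !exprS; rewrite -(signr_odd _ e); case: (odd e); rewrite /= ?expr1 ?expr0; ring.
have [_ _ u1] := prodA_Some e1.
case hc: (isI c); cbv beta iota.
  rewrite bd_kap_eval //.
  rewrite /Hd hs0 eqxx hc /= /cz.
  rewrite /sig -(Em_tgt u1).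
  rewrite !exprS; rewrite -(signr_odd _ e); case: (odd e); rewrite /= ?expr1 ?expr0; ring.
rewrite Hd_eval ?hc //.
rewrite !exprS; rewrite -(signr_odd _ e); case: (odd e); rewrite /= ?expr1 ?expr0; ring.
Qed.
End Core.

Section Main.
Variables (k : fieldType) (disp : Order.disp_t) (P : finPOrderType disp) (N : rep k P).
Local Notation IntP := (IntP P).
Local Notation BA := (BA P).
Local Notation BN := (BN N).
Local Notation chain := (chain N).

Definition csum3 e f (F : BN -> f.-tuple BA -> BA -> chain e) : chain e :=
  csum (fun n0 => csum (fun t0 => csum (fun m0 => F n0 t0 m0))).

Lemma bd_lin3 d f (c : BN -> f.-tuple BA -> BA -> k) (F : BN -> f.-tuple BA -> BA -> chain d.+1) n t m :
  bd (csum3 (fun n0 t0 m0 => cscale (c n0 t0 m0) (F n0 t0 m0))) n t m =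
  \sum_n0 \sum_t0 \sum_m0 c n0 t0 m0 * bd (F n0 t0 m0) n t m.
Proof.
rewrite /csum3 bd_csum /csum; apply: eq_bigr => n0 _.
rewrite bd_csum /csum; apply: eq_bigr => t0 _.
by rewrite bd_csum /csum; apply: eq_bigr => m0 _; rewrite bd_cscale.
Qed.

Lemma bd_lin3c d f (c : BN -> f.-tuple BA -> BA -> k) (F : BN -> f.-tuple BA -> BA -> chain d.+1) :
  bd (csum3 (fun n0 t0 m0 => cscale (c n0 t0 m0) (F n0 t0 m0))) =
  csum3 (fun n0 t0 m0 => cscale (c n0 t0 m0) (bd (F n0 t0 m0))).
Proof.
apply: functional_extensionality => n; apply: functional_extensionality => t.
apply: functional_extensionality => m.
by rewrite bd_lin3 /csum3 /csum /cscale.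
Qed.

Lemma Hv_lin3 d f (c : BN -> f.-tuple BA -> BA -> k) (F : BN -> f.-tuple BA -> BA -> chain d) n t m :
  Hv (csum3 (fun n0 t0 m0 => cscale (c n0 t0 m0) (F n0 t0 m0))) n t m =
  \sum_n0 \sum_t0 \sum_m0 c n0 t0 m0 * Hv (F n0 t0 m0) n t m.
Proof.
rewrite /csum3 Hv_csum /csum; apply: eq_bigr => n0 _.
rewrite Hv_csum /csum; apply: eq_bigr => t0 _.
by rewrite Hv_csum /csum; apply: eq_bigr => m0 _; rewrite Hv_cscale.
Qed.

Lemma sift' (T : finType) (j : T) (F : T -> k) : \sum_i ((j == i)%:R * F i) = F j.
Proof. by rewrite -(sift j F); apply: eq_bigr => i _; rewrite eq_sym. Qed.

Lemma decomp e (v : chain e) :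
  v = csum3 (fun n0 (t0 : e.-tuple BA) m0 => cscale (v n0 t0 m0) (ds e n0 (val t0) m0)).
Proof.
apply: functional_extensionality => n; apply: functional_extensionality => t.
apply: functional_extensionality => m.
rewrite /csum3 /csum /cscale /ds.
symmetry.
transitivity (\sum_n0 (n == n0)%:R * \sum_(t0 : e.-tuple BA) (t == t0)%:R *
    \sum_m0 (m == m0)%:R * v n0 t0 m0).
  apply: eq_bigr => n0 _; rewrite mulr_sumr; apply: eq_bigr => t0 _.
  rewrite !mulr_sumr; apply: eq_bigr => m0 _.
  rewrite !natr_and val_eqE; ring.
by rewrite sift' sift' sift'.
Qed.

Lemma HvE e (v : chain e) :
  Hv v = csum3 (fun n0 (t0 : e.-tuple BA) m0 => cscale (v n0 t0 m0) (Hd e n0 (val t0) m0)).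
Proof. by []. Qed.

Theorem main_thm
  (hN : forall s t : IntP, leinf (val s).2 (val t).1 -> rmap N s t = 0)
  (d : nat) (hd : (0 < d)%N) : TorVanish N d.
Proof.
case: d hd => [|e] // _ v hv.
exists (Hv v) => n t; apply: good_inI => m hm.
have hbv : forall n1 t1 m1, ~~ isI m1 -> bd v n1 t1 m1 = 0.
  by move=> n1 t1 m1 hm1; apply: (inI_good (hv n1 t1)).
have h0 : Hv (bd v) n t m = 0 by apply: Hv_good.
suff : bd (Hv v) n t m + Hv (bd v) n t m = v n t m by rewrite h0 addr0 => ->; rewrite subrr.
rewrite HvE bd_lin3.
rewrite [X in Hv (bd X)](decomp v) bd_lin3c Hv_lin3.
rewrite [X in _ = X n t m](decomp v) /csum3 /csum /cscale.
rewrite -big_split; apply: eq_bigr => n0 _.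
rewrite -big_split; apply: eq_bigr => t0 _.
rewrite -big_split; apply: eq_bigr => m0 _.
rewrite -[LHS]/(v n0 t0 m0 * _ + v n0 t0 m0 * _) -mulrDr.
apply: mulr_congr; first by [].
have [s0 [a [hs0 ht0]]] : exists s0 a, size s0 = e /\ val t0 = rcons s0 a.
  have hsz := size_tuple t0.
  case ht: (val t0) => [|x s1]; first by move: hsz; rewrite /= ht.
  exists (belast x s1), (last x s1); split; last exact: lastI.
  by move: hsz; rewrite /= ht size_belast => -[].
by rewrite ht0 core.
Qed.
End Main.

Unset Implicit Arguments.
Theorem propositionA7 (k : fieldType) (disp : Order.disp_t)
  (P : finPOrderType disp) (N : rep k P)
  (hN : forall s t : IntP P, leinf (val s).2 (val t).1 -> rmap N s t = 0)
  (d : nat) (hd : (0 < d)%N) :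
  TorVanish N d.
Proof. exact: (main_thm hN hd). Qed.
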